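(* Let $0\le s\le t$. The linear functional $X_s:W^{1,2}([0,t])\to\mathbb R$, $X_sh=\int_0^s h(u)\,\mathrm{d}Z_u$, is continuous (for every realization of $Z$), and $$\|X_s\|\le |Z_s|(1+s)+|Z_0|+\Big(\int_0^s Z_{u-}^2\,\mathrm{d}u\Big)^{1/2}<\infty.$$
   Context: $(Z_s)_{0\le s\le t}$ is a real-valued càdlàg semimartingale, $t>0$. For $h\in W^{1,2}([0,t])$ (weakly differentiable functions on $[0,t]$ with $h'\in L_2([0,t])$) the stochastic integral is defined pathwise by $\int_0^s h(u)\,\mathrm{d}Z_u:=h(s)Z_s-h(0)Z_0-\int_0^s Z_{u-}h'(u)\,\mathrm{d}u$. $W^{1,2}([0,t])$ carries the norm $\|h\|^2=|h(0)|^2+\int_0^t h'(u)^2\,\mathrm{d}u$ (a reproducing kernel Hilbert space norm with kernel $R(s,r)=1+\min(s,r)$), and $\|X_s\|$ denotes the corresponding dual norm. *)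

(* Defs.v *)
From HB Require Import structures.
From mathcomp Require Import all_boot all_order all_algebra.
From mathcomp Require Import all_classical all_reals all_analysis.
Set Implicit Arguments. Unset Strict Implicit. Unset Printing Implicit Defensive.
Import Order.TTheory GRing.Theory Num.Theory.
Import numFieldNormedType.Exports.
Local Open Scope classical_set_scope.
Local Open Scope ring_scope.

Section Defs.
Variable R : realType.
Local Notation leb := (@lebesgue_measure R).

(* A (deterministic) realization of a real-valued cadlag process on [0,t]:
   right-continuous on [0,t) and with left limits on (0,t]. *)
Definition cadlag_on (t : R) (Z : R -> R) : Prop :=
  (forall u, 0 <= u < t -> Z x @[x --> u^'+] --> Z u) /\
  (forall u, 0 < u <= t -> cvg (Z x @[x --> u^'-])).

(* Left limit Z_{u-}; by convention Z_{0-} := Z_0. *)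
Definition left_lim (Z : R -> R) (u : R) : R :=
  if 0 < u then lim (Z x @[x --> u^'-]) else Z 0.

(* (h, h') represents an element of W^{1,2}([0,t]): h' is measurable and
   square integrable on [0,t] and h is its primitive,
   h s = h 0 + \int_0^s h'(u) du (the absolutely continuous representative). *)
Definition W12 (t : R) (h h' : R -> R) : Prop :=
  measurable_fun `[0, t] h' /\
  (\int[leb]_(u in `[0%R, t]) ((h' u) ^+ 2)%:E < +oo)%E /\
  (forall s, 0 <= s <= t -> h s = h 0 + \int[leb]_(u in `[0, s]) h' u).

Definition W12_norm (t : R) (h h' : R -> R) : R :=
  Num.sqrt ((h 0) ^+ 2 + \int[leb]_(u in `[0, t]) (h' u) ^+ 2).

(* Pathwise stochastic integral
   \int_0^s h dZ := h(s) Z_s - h(0) Z_0 - \int_0^s Z_{u-} h'(u) du. *)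
Definition stoch_int (Z : R -> R) (s : R) (h h' : R -> R) : R :=
  h s * Z s - h 0 * Z 0 - \int[leb]_(u in `[0, s]) (left_lim Z u * h' u).

Definition W12_continuous (t : R) (X : (R -> R) -> (R -> R) -> R) : Prop :=
  forall h h', W12 t h h' -> forall e : R, 0 < e -> exists2 d : R, 0 < d &
    forall k k', W12 t k k' ->
      W12_norm t (k \- h) (k' \- h') < d -> `|X k k' - X h h'| < e.

Definition W12_dual_norm (t : R) (X : (R -> R) -> (R -> R) -> R) : \bar R :=
  ereal_sup [set r : \bar R | exists h h', [/\ W12 t h h',
     W12_norm t h h' <= 1 & r = (`|X h h'|)%:E]].

End Defs.

(* Main.v *)
Require Import Defs.
From HB Require Import structures.
From mathcomp Require Import all_boot all_order all_algebra.
From mathcomp Require Import all_classical all_reals all_analysis.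
From mathcomp Require Import measurable_realfun ring lra.
Import Order.TTheory GRing.Theory Num.Theory.
Import numFieldNormedType.Exports.
Local Open Scope classical_set_scope.
Local Open Scope ring_scope.
Lemma cadlag_bounded (R : realType) (t : R) (Z : R -> R) :
  cadlag_on t Z -> exists M : R, forall u, 0 <= u <= t -> `|Z u| <= M.
Proof.
case=> rc ll.
have := @segment_compact R 0 t.
move=> /compact_near_coveringP/near_covering_withinP.
move=> /(_ R (pinfty_nbhs R) (fun M x => `|Z x| <= M) _) h.
have {h} : \forall M \near +oo, `[0, t] `<=` (fun x => `|Z x| <= M).
  apply: h => x /=; rewrite in_itv/= => /andP[x0 xt].
  have [BL HL] : exists BL : R, \forall y \near x, y < x -> 0 <= y -> `|Z y| <= BL.
    have [x0'|] := ltP 0 x; last first.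
      move=> xle; exists 0; near=> y => yx y0.
      by have := le_lt_trans y0 (lt_le_trans yx xle); rewrite ltxx.
    have /cvg_ex[l hl] := ll x (introT andP (conj x0' xt)).
    exists (`|l| + 1); move/cvgrPdist_lt: hl => /(_ 1 ltr01).
    apply: filterS => y /= hy _.
    rewrite -[Z y](subrKC l) (le_trans (ler_normD _ _))// lerD2l.
    by rewrite distrC ltW.
  have [BR HR] : exists BR : R, \forall y \near x, x < y -> y <= t -> `|Z y| <= BR.
    have [xt'|] := ltP x t; last first.
      move=> xle; exists 0; near=> y => yx yt.
      by have := lt_le_trans yx (le_trans yt xle); rewrite ltxx.
    have hl := rc x (introT andP (conj x0 xt')).
    exists (`|Z x| + 1); move/cvgrPdist_lt: hl => /(_ 1 ltr01).
    apply: filterS => y /= hy _.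
    rewrite -[Z y](subrKC (Z x)) (le_trans (ler_normD _ _))// lerD2l.
    by rewrite distrC ltW.
  near=> y M => /=; rewrite in_itv/= => /andP[y0 yt].
  have [yx|xy|yx] := ltgtP y x.
  - have hL : `|Z y| <= BL by move: yx y0; near: y; exact: HL.
    by apply: le_trans hL _; near: M; apply: nbhs_pinfty_ge; exact: num_real.
  - have hR : `|Z y| <= BR by move: xy yt; near: y; exact: HR.
    by apply: le_trans hR _; near: M; apply: nbhs_pinfty_ge; exact: num_real.
  - by rewrite yx; near: M; apply: nbhs_pinfty_ge; exact: num_real.
move=> /filter_ex[M hM]; exists M => u ut; apply: hM => /=.
by rewrite in_itv/=.
Unshelve. all: by end_near.
Qed.
Lemma ge_set_meas (R : realType) (c a : R) :
  measurable [set u : R | a <= c * u].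
Proof.
apply: closed_measurable.
have -> : [set u : R | a <= c * u] = (fun u => c * u) @^-1` [set x | a <= x] by [].
apply: closed_comp; last exact: closed_ge.
move=> x _; apply: continuousM => //; exact: cvg_cst.
Qed.

Lemma trunc_fiber_meas (R : realType) (c : R) (m : nat) :
  measurable [set u : R | Num.truncn (c * u) = m].
Proof.
have -> : [set u : R | Num.truncn (c * u) = m] =
   [set u | (m <= Num.truncn (c * u))%N] `\` [set u | (m < Num.truncn (c * u))%N].
  apply/seteqP; split => u /=.
    by move=> ->; rewrite leqnn ltnn.
  by move=> [h1 /negP]; rewrite -leqNgt => h2; apply/eqP; rewrite eqn_leq h1 h2.
apply: measurableD.
  case: m => [|k].
    by have -> : [set u : R | (0 <= Num.truncn (c * u))%N] = setT by apply/seteqP; split.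
  have -> : [set u : R | (k.+1 <= Num.truncn (c * u))%N] = [set u | k.+1%:R <= c * u].
    by apply/seteqP; split => u /=; rewrite -truncn_gt_nat.
  exact: ge_set_meas.
have -> : [set u : R | (m < Num.truncn (c * u))%N] = [set u | m.+1%:R <= c * u].
  by apply/seteqP; split => u /=; rewrite -truncn_gt_nat.
exact: ge_set_meas.
Qed.

Lemma meas_comp_trunc (R : realType) (D : set R) (F : nat -> R) (c : R) :
  measurable_fun D (fun u => F (Num.truncn (c * u))).
Proof.
move=> mD B mB; apply: measurableI => //.
have -> : (fun u => F (Num.truncn (c * u))) @^-1` B =
   \bigcup_(m in [set m | B (F m)]) [set u | Num.truncn (c * u) = m].
  apply/seteqP; split => u /=.
    by move=> Bu; exists (Num.truncn (c * u)).
  by move=> [m /= Bm ->].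
by apply: bigcup_measurable => k _; exact: trunc_fiber_meas.
Qed.
Lemma approx_left {R : realType} {u : R} : 0 < u ->
  let p := fun m : nat => Num.max 0 (((Num.truncn (m.+1%:R * u))%:R - 1) / m.+1%:R) in
  (forall m, p m < u) /\ (forall m, `|u - p m| <= 2 / m.+1%:R).
Proof.
move=> u0 p; suff H : forall m, p m < u /\ u - 2 / m.+1%:R <= p m.
  split => m; first by case: (H m).
  have [h1 h2] := H m; rewrite ger0_norm; first by rewrite lerBlDr addrC -lerBlDr.
  by rewrite subr_ge0 ltW.
move=> m; rewrite /p.
set n : R := m.+1%:R; set k := Num.truncn (n * u).
have n0 : 0 < n by rewrite ltr0n.
have [hk1 hk2] : k%:R <= n * u /\ n * u < k.+1%:R.
  by apply/andP; apply: truncn_itv; rewrite mulr_ge0// ltW.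
have kS : k.+1%:R = k%:R + 1 :> R by rewrite -natr1.
rewrite kS in hk2.
set w := n^-1.
have nw : n * w = 1 by rewrite mulfV// gt_eqF.
have w0 : 0 < w by rewrite invr_gt0.
rewrite -/w.
split.
  rewrite gt_max u0 /=. nra.
rewrite le_max; apply/orP; right. nra.
Qed.

Lemma left_lim_cvg {R : realType} {t : R} {Z : R -> R} {u : R} :
  cadlag_on t Z -> 0 < u <= t -> Z x @[x --> u^'-] --> left_lim Z u.
Proof.
move=> [_ ll] hu; have u0 : 0 < u by case/andP: hu.
by rewrite /left_lim u0; exact: ll.
Qed.

Lemma left_lim_bounded {R : realType} {t : R} {Z : R -> R} {M : R} :
  cadlag_on t Z -> (forall u, 0 <= u <= t -> `|Z u| <= M) ->
  forall u, 0 <= u <= t -> `|left_lim Z u| <= M.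
Proof.
move=> cZ ZM u /andP[u0 ut].
have [upos|] := ltP 0 u; last first.
  move=> u0'; rewrite /left_lim ltNge u0' /=; apply: ZM.
  by rewrite lexx (le_trans u0 ut).
have hl := left_lim_cvg cZ (introT andP (conj upos ut)).
apply: (cvgr_to_le (cvg_norm hl)).
near=> x; apply: ZM; apply/andP; split.
  by near: x; apply: nbhs_left_ge.
have : x < u by near: x; exact: nbhs_left_lt.
by move=> /ltW /le_trans; apply.
Unshelve. all: by end_near.
Qed.

Lemma left_lim_meas {R : realType} {t : R} {Z : R -> R} :
  cadlag_on t Z -> measurable_fun `[0, t] (left_lim Z).
Proof.
move=> cZ.
pose h := (fun (m : nat) (u : R) => Z (Num.max 0 (((Num.truncn (m.+1%:R * u))%:R - 1) / m.+1%:R))).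
have H1 : forall m, measurable_fun `[0, t] (h m).
  move=> m.
  exact: (@meas_comp_trunc R _ (fun k => Z (Num.max 0 ((k%:R - 1) / m.+1%:R))) m.+1%:R).
suff H2 : forall u, `[0, t]%classic u -> h ^~ u @ \oo --> left_lim Z u.
  exact: measurable_fun_cvg H1 H2.
rewrite {H1}/h.
move=> u; rewrite /= in_itv /= => /andP[u0 ut].
have [upos|u0'] := ltP 0 u; last first.
  have -> : u = 0 by apply/le_anti; rewrite u0 u0'.
  rewrite /left_lim ltxx.
  apply: cvg_near_cst; apply: nearW => m /=.
  rewrite mulr0 truncn0 sub0r max_l //.
have hl := left_lim_cvg cZ (introT andP (conj upos ut)).
move/cvg_at_leftP: hl; apply.
have [h1 h2] := approx_left upos.
split; first exact: h1.
apply/cvgrPdist_le => e e0.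
near=> m; apply: le_trans (h2 m) _.
have : m.+1%:R^-1 < (PosNum (divr_gt0 e0 (ltr0n R 2)))%:num.
  by near: m; exact: near_infty_natSinv_lt.
rewrite /= => h; move: h; set a := m.+1%:R^-1 => h.
lra.
Unshelve. all: by end_near.
Qed.

Section CS.
Context {R : realType}.
Local Notation leb := (@lebesgue_measure R).
Local Notation RR := (measurableTypeR R).

Lemma intZ {D : set RR} {h : RR -> R} {k : R} : measurable D ->
  leb.-integrable D (EFin \o h) -> leb.-integrable D (EFin \o (fun x => k * h x)).
Proof.
move=> mD ih; have H := integrableZl mD k ih.
apply: (eq_integrable mD _ _ _ H) => x _ /=; by rewrite EFinM.
Qed.

Lemma intD {D : set RR} {h g : RR -> R} : measurable D ->
  leb.-integrable D (EFin \o h) -> leb.-integrable D (EFin \o g) ->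
  leb.-integrable D (EFin \o (fun x => h x + g x)).
Proof.
move=> mD ih ig; have H := integrableD mD ih ig.
exact: (eq_integrable mD _ _ _ H).
Qed.

Lemma intB {D : set RR} {h g : RR -> R} : measurable D ->
  leb.-integrable D (EFin \o h) -> leb.-integrable D (EFin \o g) ->
  leb.-integrable D (EFin \o (fun x => h x - g x)).
Proof.
move=> mD ih ig; have H := integrableB mD ih ig.
exact: (eq_integrable mD _ _ _ H).
Qed.

Lemma intM {D : set RR} {f g : RR -> R} : measurable D ->
  measurable_fun D f -> measurable_fun D g ->
  leb.-integrable D (EFin \o (fun x => f x ^+ 2)) ->
  leb.-integrable D (EFin \o (fun x => g x ^+ 2)) ->
  leb.-integrable D (EFin \o (fun x => f x * g x)).
Proof.
move=> mD mf mg iA iB.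
refine (le_integrable mD _ _ (intD mD iA iB)).
  by apply/measurable_EFinP; exact: measurable_funM.
move=> x _ /=; rewrite lee_fin (ger0_norm (addr_ge0 (sqr_ge0 _) (sqr_ge0 _))) ler_norml; apply/andP; split; nra.
Qed.

Lemma quad_disc {A B C : R} : 0 <= B ->
  (forall l, 0 <= A - 2 * l * C + l ^+ 2 * B) -> C ^+ 2 <= A * B.
Proof.
move=> B0 H.
have A0 : 0 <= A by have := H 0; rewrite !(mulr0, mul0r, expr0n) /= subr0 addr0.
have [Bpos|] := ltP 0 B.
  have := H (C / B).
  set w := B^-1; have Bw : B * w = 1 by rewrite mulfV// gt_eqF.
  have w0 : 0 < w by rewrite invr_gt0.
  move=> h.
  have : 0 <= B * (A - 2 * (C * w) * C + (C * w) ^+ 2 * B) by rewrite mulr_ge0// ltW.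
  nra.
move=> Ble; have B00 : B = 0 by apply/le_anti; rewrite Ble B0.
rewrite B00 mulr0.
have [C0|C0] := eqVneq C 0; first by rewrite C0 expr0n.
have := H ((A + 1) / (2 * C)); rewrite B00 mulr0 addr0.
have -> : 2 * ((A + 1) / (2 * C)) * C = A + 1.
  by field.
lra.
Qed.

Lemma CS {D : set RR} {f g : RR -> R} : measurable D ->
  measurable_fun D f -> measurable_fun D g ->
  leb.-integrable D (EFin \o (fun x => f x ^+ 2)) ->
  leb.-integrable D (EFin \o (fun x => g x ^+ 2)) ->
  `|\int[leb]_(x in D) (f x * g x)| <=
    Num.sqrt (\int[leb]_(x in D) (f x ^+ 2)) * Num.sqrt (\int[leb]_(x in D) (g x ^+ 2)).
Proof.
move=> mD mf mg iA iB.
have iC := intM mD mf mg iA iB.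
set A := \int[leb]_(x in D) (f x ^+ 2).
set B := \int[leb]_(x in D) (g x ^+ 2).
set C := \int[leb]_(x in D) (f x * g x).
have A0 : 0 <= A by apply: Rintegral_ge0 => x _; exact: sqr_ge0.
have B0 : 0 <= B by apply: Rintegral_ge0 => x _; exact: sqr_ge0.
have key : forall l, 0 <= A - 2 * l * C + l ^+ 2 * B.
  move=> l.
  have -> : A - 2 * l * C + l ^+ 2 * B =
      \int[leb]_(x in D) ((f x ^+ 2 + (- (2 * l)) * (f x * g x)) + l ^+ 2 * g x ^+ 2).
    rewrite RintegralD //; last exact: intZ.
      rewrite RintegralD //; last exact: intZ.
      by rewrite !RintegralZl // -/A -/B -/C; ring.
    by apply: intD => //; exact: intZ.
  by apply: Rintegral_ge0 => x _; apply: le_trans (sqr_ge0 (f x - l * g x)) _; rewrite le_eqVlt; apply/orP; left; apply/eqP; ring.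
have := quad_disc B0 key.
by rewrite -(@ler_sqrt _ _ _ (mulr_ge0 A0 B0)) sqrtr_sqr sqrtrM.
Qed.

End CS.

Section Main.
Context {R : realType}.
Local Notation leb := (@lebesgue_measure R).
Local Notation RR := (measurableTypeR R).

Lemma toRR {D : set R} {f : R -> R} : measurable_fun D f -> measurable_fun (D : set RR) f.
Proof. by []. Qed.

Lemma toRRm {D : set R} : measurable D -> measurable (D : set RR).
Proof. by []. Qed.

Lemma leb_itv {s : R} : 0 <= s -> leb `[0, s] = s%:E.
Proof.
move=> s0; rewrite lebesgue_measure_itv /= lte_fin.
case: ltP => [_|h]; first by rewrite oppr0 adde0.
have -> : s = 0 by apply/le_anti; rewrite s0 h.
by [].
Qed.

Lemma int_bounded (s Mb : R) (f : R -> R) : 0 <= s ->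
  measurable_fun (`[0, s] : set RR) f -> (forall u, 0 <= u <= s -> `|f u| <= Mb) ->
  leb.-integrable `[0, s] (EFin \o f).
Proof.
move=> s0 mf fM; apply: measurable_bounded_integrable => //.
- by have := leb_itv s0; rewrite /= => ->; rewrite ltry.
- exists Mb; split; first exact: num_real.
  move=> x Mx y; rewrite /= in_itv /= => ys.
  by apply: le_trans (fM y ys) (ltW Mx).
Qed.


Lemma norm_alg {a b c s N : R} : 0 <= a -> 0 <= b -> 0 <= c -> c ^+ 2 = s ->
  0 <= N -> a ^+ 2 + b ^+ 2 <= N ^+ 2 -> a + c * b <= (1 + s) * N.
Proof.
move=> a0 b0 c0 cs N0 hN.
have s0 : 0 <= s by rewrite -cs sqr_ge0.
have h1 := sqr_ge0 (a * c - b).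
have y0 : 0 <= (1 + s) * N by rewrite mulr_ge0 // addr_ge0.
have hx : (a + c * b) ^+ 2 <= ((1 + s) * N) ^+ 2.
  have e1 : (a + c * b) ^+ 2 <= (1 + s) * (a ^+ 2 + b ^+ 2) by rewrite -cs; nra.
  apply: le_trans e1 _.
  have : (1 + s) * (a ^+ 2 + b ^+ 2) <= (1 + s) * N ^+ 2 by rewrite ler_wpM2l // addr_ge0.
  move=> e2; apply: le_trans e2 _; nra.
have [//|lt] := leP (a + c * b) ((1 + s) * N).
nra.
Qed.

Lemma main_bound (t s M : R) (Z : R -> R) : 0 <= s -> s <= t -> cadlag_on t Z ->
  (forall u, 0 <= u <= t -> `|left_lim Z u| <= M) ->
  forall h h' : R -> R, measurable_fun `[0, t] h' ->
  leb.-integrable `[0, t] (EFin \o (fun x => h' x ^+ 2)) ->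
  h s = h 0 + \int[leb]_(u in `[0, s]) h' u ->
  `|stoch_int Z s h h'| <=
   (`|Z s| * (1 + s) + `|Z 0| + Num.sqrt (\int[leb]_(u in `[0, s]) (left_lim Z u) ^+ 2))
     * W12_norm t h h'.
Proof.
move=> s0 st cZ fM h h' mh' ih' hs.
have sub : (`[0, s] : set RR) `<=` `[0, t].
  by move=> x; rewrite /= !in_itv /= => /andP[a b]; rewrite a (le_trans b st).
have mDs : measurable (`[0, s] : set RR) by exact: measurable_itv.
have mDt : measurable (`[0, t] : set RR) by exact: measurable_itv.
have mh's : measurable_fun (`[0, s] : set RR) h' := measurable_funS mDt sub (toRR mh').
have ih's := integrableS mDt mDs sub ih'.
have mf : measurable_fun (`[0, s] : set RR) (left_lim Z) :=
  measurable_funS mDt sub (toRR (left_lim_meas cZ)).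
have fMs : forall u, 0 <= u <= s -> `|left_lim Z u| <= M.
  move=> u /andP[u0 us]; apply: fM; by rewrite u0 (le_trans us st).
have M0 : 0 <= M by apply: le_trans (fMs 0 _); rewrite ?normr_ge0 // lexx s0.
have if2 : leb.-integrable `[0, s] (EFin \o (fun x => left_lim Z x ^+ 2)).
  apply: (@int_bounded s (M * M)) => //; first exact: measurable_funX.
  move=> u us; rewrite normrX expr2; have := fMs u us => hu.
  by apply: ler_pM => //.
have m1 : measurable_fun (`[0, s] : set RR) (fun _ : RR => (1 : R)) by exact: measurable_cst.
have i1 : leb.-integrable `[0, s] (EFin \o (fun x : RR => (fun _ : RR => (1 : R)) x ^+ 2)).
  by apply: (@int_bounded s 1) => // u _; rewrite expr1n normr1.
have CS1 := CS mDs mf mh's if2 ih's.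
have CS2 := CS mDs m1 mh's i1 ih's.
have E1 : \int[leb]_(x in `[0, s]) ((fun _ : RR => (1 : R)) x ^+ 2) = s.
  under eq_Rintegral do rewrite expr1n.
  rewrite Rintegral_cst // mul1r.
  by have := leb_itv s0; rewrite /= => ->.
have E2 : \int[leb]_(x in `[0, s]) ((fun _ : RR => (1 : R)) x * h' x) =
          \int[leb]_(x in `[0, s]) h' x.
  by apply: eq_Rintegral => x _; rewrite mul1r.
rewrite E1 E2 in CS2.
set Bs := \int[leb]_(x in `[0, s]) (h' x ^+ 2) in CS1 CS2.
set Bt := \int[leb]_(x in `[0, t]) (h' x ^+ 2).
set IA := \int[leb]_(x in `[0, s]) (left_lim Z x ^+ 2) in CS1 *.
set I := \int[leb]_(x in `[0, s]) (left_lim Z x * h' x) in CS1 *.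
set J := \int[leb]_(x in `[0, s]) h' x in CS2 hs.
have Bs0 : 0 <= Bs by apply: Rintegral_ge0 => x _; exact: sqr_ge0.
have BsBt : Bs <= Bt.
  rewrite /Bs /Bt /Rintegral fine_le //.
  - exact: integrable_fin_num.
  - exact: integrable_fin_num.
  apply: ge0_subset_integral => //.
    by apply/measurable_EFinP; apply: measurable_funX; exact: toRR.
  by move=> x _; rewrite lee_fin sqr_ge0.
rewrite /W12_norm -/Bt.
set N := Num.sqrt (h 0 ^+ 2 + Bt).
have N0 : 0 <= N by exact: sqrtr_ge0.
have NN : N ^+ 2 = h 0 ^+ 2 + Bt by rewrite sqr_sqrtr // addr_ge0 ?sqr_ge0 // (le_trans Bs0 BsBt).
have bN : `|h 0| ^+ 2 + Num.sqrt Bs ^+ 2 <= N ^+ 2.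
  by rewrite NN sqr_sqrtr // real_normK ?num_real // lerD2l.
have key := norm_alg (normr_ge0 (h 0)) (sqrtr_ge0 Bs) (sqrtr_ge0 s) (sqr_sqrtr s0) N0 bN.
have hsb : `|h s| <= (1 + s) * N.
  rewrite hs; apply: le_trans (ler_normD _ _) _; apply: le_trans key.
  by rewrite lerD2l.
have a0 : `|h 0| <= N.
  have e : `|h 0| ^+ 2 <= N ^+ 2 by apply: le_trans bN; rewrite lerDl sqr_ge0.
  have [//|lt] := leP (`|h 0|) N; have := normr_ge0 (h 0); nra.
have b0 : Num.sqrt Bs <= N.
  have e : Num.sqrt Bs ^+ 2 <= N ^+ 2 by apply: le_trans bN; rewrite lerDr sqr_ge0.
  have [//|lt] := leP (Num.sqrt Bs) N; have := sqrtr_ge0 Bs; nra.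
have qb : Num.sqrt IA * Num.sqrt Bs <= Num.sqrt IA * N by rewrite ler_wpM2l // sqrtr_ge0.
rewrite /stoch_int -/I.
have t1 : `|h s * Z s - h 0 * Z 0 - I| <= `|h s| * `|Z s| + `|h 0| * `|Z 0| + `|I|.
  rewrite -!normrM; apply: le_trans (ler_normB _ _) _; rewrite lerD2r; exact: ler_normB.
have t2 : `|h s| * `|Z s| <= (1 + s) * N * `|Z s| by rewrite ler_wpM2r.
have t3 : `|h 0| * `|Z 0| <= N * `|Z 0| by rewrite ler_wpM2r.
apply: le_trans t1 _.
lra.
Qed.


Lemma W12_int {t : R} {h h' : R -> R} : W12 t h h' ->
  leb.-integrable `[0, t] (EFin \o (fun x => h' x ^+ 2)).
Proof.
move=> [mh' [ih' _]]; apply/integrableP; split.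
  by apply/measurable_EFinP; apply: measurable_funX; exact: toRR.
apply: le_lt_trans ih'; rewrite le_eqVlt; apply/orP; left; apply/eqP.
by apply: eq_integral => x _ /=; rewrite ger0_norm // sqr_ge0.
Qed.

Lemma int_restr {t s : R} {h' : R -> R} : 0 <= s -> s <= t ->
  measurable_fun `[0, t] h' ->
  leb.-integrable `[0, t] (EFin \o (fun x => h' x ^+ 2)) ->
  [/\ measurable_fun (`[0, s] : set RR) h',
      leb.-integrable `[0, s] (EFin \o (fun x => h' x ^+ 2)) &
      leb.-integrable `[0, s] (EFin \o h')].
Proof.
move=> s0 st mh' ih'.
have sub : (`[0, s] : set RR) `<=` `[0, t].
  by move=> x; rewrite /= !in_itv /= => /andP[a b]; rewrite a (le_trans b st).
have mDs : measurable (`[0, s] : set RR) by exact: measurable_itv.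
have mDt : measurable (`[0, t] : set RR) by exact: measurable_itv.
have mh's : measurable_fun (`[0, s] : set RR) h' := measurable_funS mDt sub (toRR mh').
have ih's := integrableS mDt mDs sub ih'.
have m1 : measurable_fun (`[0, s] : set RR) (fun _ : RR => (1 : R)) by exact: measurable_cst.
have i1 : leb.-integrable `[0, s] (EFin \o (fun x : RR => (fun _ : RR => (1 : R)) x ^+ 2)).
  by apply: (@int_bounded s 1) => // u _; rewrite expr1n normr1.
split => //.
have := intM mDs m1 mh's i1 ih's.
apply: (eq_integrable mDs) => x _ /=; by rewrite mul1r.
Qed.

Lemma int_sq_sub {t : R} {h' k' : R -> R} :
  measurable_fun `[0, t] h' -> measurable_fun `[0, t] k' ->
  leb.-integrable `[0, t] (EFin \o (fun x => h' x ^+ 2)) ->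
  leb.-integrable `[0, t] (EFin \o (fun x => k' x ^+ 2)) ->
  leb.-integrable `[0, t] (EFin \o (fun x => (k' \- h') x ^+ 2)).
Proof.
move=> mh' mk' ih ik.
have mDt : measurable (`[0, t] : set RR) by exact: measurable_itv.
have i2 := intD mDt (intZ (k := 2) mDt ik) (intZ (k := 2) mDt ih).
refine (le_integrable mDt _ _ i2).
  apply/measurable_EFinP; apply: measurable_funX; apply: measurable_funB; exact: toRR.
move=> x _ /=; rewrite lee_fin (ger0_norm (sqr_ge0 _)) ger0_norm; last by rewrite addr_ge0 // mulr_ge0 // sqr_ge0.
have := sqr_ge0 (k' x + h' x); nra.
Qed.
End Main.

Theorem lemmaA1 (R : realType) (t s : R) (Z : R -> R) :
  0 < t -> 0 <= s <= t -> cadlag_on t Z ->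
  [/\ W12_continuous t (stoch_int Z s),
      (\int[@lebesgue_measure R]_(u in `[0%R, s]) ((left_lim Z u) ^+ 2)%:E < +oo)%E &
      (W12_dual_norm t (stoch_int Z s) <=
        (`|Z s| * (1 + s) + `|Z 0| +
         Num.sqrt (\int[@lebesgue_measure R]_(u in `[0, s]) (left_lim Z u) ^+ 2))%:E)%E].
Proof.
move=> t0 /andP[s0 st] cZ.
have [M hM] := cadlag_bounded _ _ _ cZ.
have fM := left_lim_bounded cZ hM.
have bound := main_bound _ _ _ _ s0 st cZ fM.
set K := `|Z s| * (1 + s) + `|Z 0| + Num.sqrt _ in bound *.
have K0 : 0 <= K by rewrite /K !addr_ge0 ?mulr_ge0 ?sqrtr_ge0 // addr_ge0.
have sub : (`[0, s] : set (measurableTypeR R)) `<=` `[0, t].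
  by move=> x; rewrite /= !in_itv /= => /andP[a b]; rewrite a (le_trans b st).
have mDs : measurable (`[0, s] : set (measurableTypeR R)) by exact: measurable_itv.
have mDt : measurable (`[0, t] : set (measurableTypeR R)) by exact: measurable_itv.
have mf : measurable_fun (`[0, s] : set (measurableTypeR R)) (left_lim Z) :=
  measurable_funS mDt sub (toRR (left_lim_meas cZ)).
have fMs : forall u, 0 <= u <= s -> `|left_lim Z u| <= M.
  move=> u /andP[u0 us]; apply: fM; by rewrite u0 (le_trans us st).
have M0 : 0 <= M by apply: le_trans (fMs 0 _); rewrite ?normr_ge0 // lexx s0.
have if2 : (@lebesgue_measure R).-integrable `[0, s] (EFin \o (fun x => left_lim Z x ^+ 2)).
  apply: (@int_bounded R s (M * M)) => //; first exact: measurable_funX.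
  move=> u us; rewrite normrX expr2; have := fMs u us => hu.
  by apply: ler_pM => //.
split.
- move=> h h' Wh e e0.
  have K1 : 0 < K + 1 by rewrite ltr_wpDl.
  exists (e / (K + 1)); first by rewrite divr_gt0.
  move=> k k' Wk hn.
  have ih := W12_int Wh; have ik := W12_int Wk.
  case: Wh => mh' [_ hh]; case: Wk => mk' [_ hk].
  have [mh's ih's i1h] := int_restr s0 st mh' ih.
  have [mk's ik's i1k] := int_restr s0 st mk' ik.
  have ifh := intM mDs mf mh's if2 ih's.
  have ifk := intM mDs mf mk's if2 ik's.
  have hd : (k \- h) s = (k \- h) 0 + \int[@lebesgue_measure R]_(u in `[0, s]) (k' \- h') u.
    rewrite /= (hk s) ?s0 ?st // (hh s) ?s0 ?st // RintegralB //.
    lra.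
  have eqX : stoch_int Z s k k' - stoch_int Z s h h' = stoch_int Z s (k \- h) (k' \- h').
    rewrite /stoch_int /=.
    have -> : \int[@lebesgue_measure R]_(u in `[0, s]) (left_lim Z u * (k' u - h' u)) =
        \int[@lebesgue_measure R]_(u in `[0, s]) (left_lim Z u * k' u) -
        \int[@lebesgue_measure R]_(u in `[0, s]) (left_lim Z u * h' u).
      by rewrite -RintegralB //; apply: eq_Rintegral => x _; rewrite mulrBr.
    lra.
  have bd := bound (k \- h) (k' \- h') (measurable_funB mk' mh') (int_sq_sub mh' mk' ih ik) hd.
  rewrite eqX; apply: le_lt_trans bd _.
  have n0 : 0 <= W12_norm t (k \- h) (k' \- h') by exact: sqrtr_ge0.
  apply: (le_lt_trans (y := K * (e / (K + 1)))).
    by rewrite ler_wpM2l // ltW.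
  set w := (K + 1)^-1.
  have Kw : (K + 1) * w = 1 by rewrite mulfV // gt_eqF.
  have w0 : 0 < w by rewrite invr_gt0.
  rewrite -/w; nra.
- have := if2; move/integrableP => [_]; apply: le_lt_trans.
  rewrite le_eqVlt; apply/orP; left; apply/eqP.
  by apply: eq_integral => x _ /=; rewrite ger0_norm // sqr_ge0.
- apply: ge_ereal_sup => _ [h [h' [Wh hn1 ->]]].
  have ih := W12_int Wh.
  case: Wh => mh' [_ hh].
  rewrite lee_fin; apply: le_trans (bound h h' mh' ih (hh s _)) _.
    by rewrite s0 st.
  have n0 : 0 <= W12_norm t h h' by exact: sqrtr_ge0.
  by rewrite -[X in _ <= X]mulr1 ler_wpM2l.
Qed.
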